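(* Let $K=(\mathbb{V},U,\mathbb{F},\succ)$ be a circuit. Let $A=(\mathbb{V}_A,U,\mathbb{F}_A,\succ)$ be an $\eta$-faithful interpretation of $K$ through an alignment $\pi$, and let $A^\star=(\mathbb{V}_A^\star,U,\mathbb{F}_A^\star,\succ)$ be an $\eta$-faithful interpretation of $A$ through an alignment $\pi^\star$. Then $A^\star$ is a $2\eta$-faithful interpretation of $K$ through the alignment $\pi^\star\circ\pi$.
   Context: A deterministic causal model is $(\mathbb{V},U,\mathbb{F},\succ)$ with hidden variables $\mathbb{V}$, input $U$, functions $\mathbb{F}$, partial order $\succ$, and $v_k:=f_k(\mathrm{Pa}(v_k),U)$ with $\mathrm{Pa}(v_k)\subseteq\{v:v\succ v_k\}$; $v^{\mathbb{F}}$ denotes the solution of variable $v$ as a function of the input. Interventions $\mathrm{do}(v_k\leftarrow\tilde f)$ replace $v_k$'s equation; $\mathcal{I}(\mathbb{V})$ is the set of interventions. $K'=(\tilde{\mathbb{V}},\tilde U,\tilde{\mathbb{F}},\cdot)$ abstracts $K$ through an alignment $\pi$ if $\pi:\mathrm{SubsetsOf}(\mathbb{V})\to\tilde{\mathbb{V}}$ is surjective, $\tilde v_k=\pi\big(\bigcup_{v_k\in\pi^{-1}(\tilde v_k)}f_k(\mathrm{Pa}(v_k),U)\big)$ for all $\tilde v_k$, and there is a surjection $\omega:\mathcal{I}(\mathbb{V})\to\mathcal{I}(\tilde{\mathbb{V}})$ with $\pi(\mathrm{do}(v_k\leftarrow f))=\mathrm{do}(\pi(v_k)\leftarrow\omega(f))$.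 The composition $\pi^\star\circ\pi$ means applying $\pi$ then $\pi^\star$. A circuit of a language model $h:\Sigma^*\to\mathbb{R}^{|\Sigma|}$ on a task $S\subseteq\Sigma^*$ is a causal model with $S$-valued input, real-vector hidden variables and a terminal output variable $v_{\mathrm{out}}$ with $v_{\mathrm{out}}^{\mathbb{F}}=h$ on $S$. A causal model $A$ that abstracts a causal model $K$ (having an output variable $v_{\mathrm{out}}$) is an $\eta$-faithful interpretation of $K$ if $A$ has an output variable $v^\star_{\mathrm{out}}$ with $\|v^{\star}_{\mathrm{out}}-v_{\mathrm{out}}\|<\eta$ on $S$. *)

(* Defs.v *)
From HB Require Import structures.
From mathcomp Require Import all_boot all_order all_algebra.
From mathcomp Require Import all_classical all_reals normedtype.
Unset Printing Implicit Defensive.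
Import Order.TTheory GRing.Theory Num.Theory.
Import numFieldNormedType.Exports.
Local Open Scope ring_scope.

(* Deterministic causal models (V, U, F, >-) with a designated output var.   *)
(*   [before M p k] reads  p >- k  : p may be a parent of k.                 *)
(*   A mechanism for k receives the values of all variables p >- k (so       *)
(*   Pa(k) is automatically a subset of {p | p >- k}) and the input u.       *)
Record cmodel (U W : Type) := CModel {
  var : eqType;
  Val : var -> Type;
  before : var -> var -> Prop;
  before_trans : forall a b c, before a b -> before b c -> before a c;
  before_wf : well_founded before;
  mech_of : forall k, (forall p, before p k -> Val p) -> U -> Val k;
  out : var;
  out_eq : Val out = W
}.
Arguments var {U W} c : rename.
Arguments Val {U W} c _ : rename.
Arguments before {U W} c _ _ : rename.
Arguments before_wf {U W} c : rename.
Arguments mech_of {U W} c k _ _ : rename.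
Arguments out {U W} c : rename.
Arguments out_eq {U W} c : rename.

Section CausalModels.
Variables (U W : Type).

Definition mechT (M : cmodel U W) (k : var M) : Type :=
  (forall p, before M p k -> Val M p) -> U -> Val M k.

Definition solve (M : cmodel U W) (m : forall k, mechT M k) (u : U)
  : forall v : var M, Val M v :=
  Fix (before_wf M) (Val M) (fun k rec => m k rec u).
Arguments solve M m u v : clear implicits.

Definition sol (M : cmodel U W) (u : U) : forall v, Val M v :=
  solve M (mech_of M) u.

Definition do_mechs (M : cmodel U W) (k : var M) (g : mechT M k)
  : forall v, mechT M v :=
  fun v => match @eqP _ k v with
           | ReflectT e => eq_rect k (mechT M) g v e
           | ReflectF _ => mech_of M v
           end.

Definition sol_do (M : cmodel U W) (k : var M) (g : mechT M k) (u : U)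
  : forall v, Val M v :=
  solve M (do_mechs M k g) u.

Definition out_val (M : cmodel U W) (x : Val M (out M)) : W :=
  eq_rect _ (fun T : Type => T) x _ (out_eq M).

(* Alignments: a (surjectivity is required in [abstracts]) map from the       *)
(* variables of K to those of A, whose fibres pi^{-1}(a) are the groups of    *)
(* low-level variables, together with the value-level map sending the values *)
(* of the group pi^{-1}(a) to a value of a.                                   *)
Record alignment (K A : cmodel U W) := Alignment {
  amap : var K -> var A;
  avals : forall a : var A,
      (forall v : {v : var K | amap v = a}, Val K (proj1_sig v)) -> Val A a
}.

Definition abstracts (K A : cmodel U W) (pi : alignment K A) : Prop :=
  (forall a : var A, exists v : var K, amap K A pi v = a)
  /\ (forall (u : U) (a : var A),
        sol A u a = avals K A pi a (fun v => sol K u (proj1_sig v)))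
  /\ exists om : forall k : var K, mechT K k -> mechT A (amap K A pi k),
       (* omega : I(V) -> I(V~) is surjective *)
       (forall (a : var A) (g : mechT A a), exists (k : var K) (f : mechT K k),
           existT (mechT A) (amap K A pi k) (om k f) = existT (mechT A) a g)
       (* pi(do(v_k <- f)) = do(pi(v_k) <- omega(f)) *)
       /\ (forall (k : var K) (f : mechT K k) (u : U) (a : var A),
             sol_do A (amap K A pi k) (om k f) u a
             = avals K A pi a (fun v => sol_do K k f u (proj1_sig v))).

Definition comp_fib (K A B : cmodel U W) (pi : alignment K A)
  (pis : alignment A B) (b : var B)
  (a : {a : var A | amap A B pis a = b})
  (v : {v : var K | amap K A pi v = proj1_sig a})
  : {v : var K | amap A B pis (amap K A pi v) = b} :=
  exist _ (proj1_sig v)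
    (eq_trans (f_equal (amap A B pis) (proj2_sig v)) (proj2_sig a)).

Definition comp_alignment (K A B : cmodel U W) (pi : alignment K A)
  (pis : alignment A B) : alignment K B :=
  Alignment K B (fun v => amap A B pis (amap K A pi v))
    (fun b x => avals A B pis b (fun a =>
        avals K A pi (proj1_sig a)
          (fun v => x (comp_fib K A B pi pis b a v)))).

End CausalModels.
Arguments amap {U W K A} a _ : rename.
Arguments avals {U W K A} a b _ : rename.
Arguments Alignment {U W} K A _ _.
Arguments alignment {U W} K A.
Arguments mechT {U W} M k.
Arguments solve {U W} M m u v.
Arguments sol {U W} M u v.
Arguments do_mechs {U W} M k g v.
Arguments sol_do {U W} M k g u v.
Arguments out_val {U W} M x.
Arguments abstracts {U W} K A pi.
Arguments comp_fib {U W K A B} pi pis b a v.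
Arguments comp_alignment {U W K A B} pi pis.

Section Interp.
Variables (R : realType) (Sigma : finType) (S : pred (seq Sigma)).

Definition task_input : Type := {x : seq Sigma | S x}.
Definition outT : Type := 'rV[R]_#|Sigma|.

Definition is_circuit (h : seq Sigma -> outT) (K : cmodel task_input outT)
  : Prop :=
  (forall v : var K, exists n : nat, Val K v = 'rV[R]_n)
  /\ (forall w : var K, ~ before K (out K) w)
  /\ (forall u : task_input, out_val K (sol K u (out K)) = h (proj1_sig u)).

Definition faithful_interp (K A : cmodel task_input outT)
  (pi : alignment K A) (eta : R) : Prop :=
  abstracts K A pi /\
  forall u : task_input,
    `| out_val A (sol A u (out A)) - out_val K (sol K u (out K)) | < eta.

End Interp.
Arguments is_circuit {R Sigma S} h K.
Arguments faithful_interp {R Sigma S} K A pi eta.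

(* Main.v *)
Require Import Defs.
From HB Require Import structures.
From mathcomp Require Import all_boot all_order all_algebra.
From mathcomp Require Import all_classical all_reals normedtype.
Import Order.TTheory GRing.Theory Num.Theory.
Local Open Scope ring_scope.

Theorem propositionF3 (R : realType) (Sigma : finType) (S : pred (seq Sigma))
  (h : seq Sigma -> outT R Sigma)
  (K A As : cmodel (task_input Sigma S) (outT R Sigma))
  (pi : alignment K A) (pis : alignment A As) (eta : R) :
  is_circuit h K ->
  faithful_interp K A pi eta ->
  faithful_interp A As pis eta ->
  faithful_interp K As (comp_alignment pi pis) (2 * eta).
Proof.
move=> _ [[s1 [e1 [om1 [so1 d1]]]] n1] [[s2 [e2 [om2 [so2 d2]]]] n2].
split.
  split.
    move=> b; have [a <-] := s2 b; have [v <-] := s1 a; by exists v.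
  split.
    move=> u b; rewrite e2 /=; congr (avals pis b _).
    by apply: functional_extensionality_dep => a; rewrite e1.
  exists (fun k f => om2 (amap pi k) (om1 k f)); split.
    move=> b g; have [a [g' E2]] := so2 b g; have [k [f E1]] := so1 a g'.
    exists k, f.
    have := f_equal (fun s : sigT (mechT A) =>
      existT (mechT As) (amap pis (projT1 s)) (om2 (projT1 s) (projT2 s))) E1.
    move=> /= ->; exact: E2.
  move=> k f u b; rewrite d2 /=; congr (avals pis b _).
  by apply: functional_extensionality_dep => a; rewrite d1.
move=> u.
have H1 := n1 u; have H2 := n2 u.
move: H1 H2.
move: (out_val As (sol As u (out As))) (out_val A (sol A u (out A))) (out_val K (sol K u (out K))) => x y z H1 H2.
have E : x - z = (x - y) + (y - z) by rewrite addrA subrK.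
rewrite E.
have L := ler_normD (x - y) (y - z).
have L2 : `|x - y| + `|y - z| < eta + eta by apply: ltrD.
have E2 : 2 * eta = eta + eta by rewrite mulr_natl mulr2n.
rewrite E2.
exact: le_lt_trans L L2.
Qed.
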